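(* Let $T=1$ and let $\mathcal I$ be a random variable with $\mathbb P(\mathcal I=1)=\mathbb P(\mathcal I=2)=\tfrac12$. Let $\mathcal F_t=\mathcal F^1_t$ be the $\sigma$-algebra generated by $\mathcal I$ and the $\mathbb P$-null sets for all $t\in[0,1]$, and let $\mathcal F^2_t$ be the trivial $\sigma$-algebra augmented by $\mathbb P$-null sets for all $t\in[0,1]$. Consider the payoff $$\mathcal P(\tau,\sigma)=f_\tau1_{\{\tau<\sigma\}}+g_\sigma1_{\{\sigma<\tau\}}+h_\tau1_{\{\tau=\sigma\}}$$ with $f_t\equiv1$, $g_t=\tfrac12t$, $h_t=1$ for $t<1$, and $h_1=2$ on $\{\mathcal I=1\}$, $h_1=0$ on $\{\mathcal I=2\}$, and let $N(\tau,\sigma)=\mathbb E[\mathcal P(\tau,\sigma)]$. Then $$\sup_{\sigma\in\mathcal T^R(\mathcal F^2_t)}\inf_{\tau\in\mathcal T^R(\mathcal F^1_t)}N(\tau,\sigma)\le\tfrac12<\inf_{\tau\in\mathcal T^R(\mathcal F^1_t)}\sup_{\sigma\in\mathcal T^R(\mathcal F^2_t)}N(\tau,\sigma),$$ so the game has no value in randomised strategies.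
   Context: For a filtration $(\mathcal G_t)_{t\in[0,1]}\subseteq(\mathcal F_t)$ on a complete probability space supporting independent uniform random variables independent of $\mathcal F_1$, $\mathcal A^\circ(\mathcal G_t)$ is the set of $(\mathcal G_t)$-adapted processes $\rho$ with, for every $\omega$, $t\mapsto\rho_t(\omega)$ càdlàg, non-decreasing, $\rho_{0-}=0$, $\rho_1=1$. A $(\mathcal G_t)$-randomised stopping time is $\eta=\inf\{t\in[0,1]:\rho_t>Z\}$ with $\rho\in\mathcal A^\circ(\mathcal G_t)$ and $Z\sim U([0,1])$ independent of $\mathcal F_1$; $\mathcal T^R(\mathcal G_t)$ is the set of these, and the randomisation devices of $\tau$ and $\sigma$ are independent of each other and of $\mathcal F_1$. Here $\tau$ (chosen by the informed player, who knows $\mathcal I$) is the minimiser and $\sigma$ (chosen by the uninformed player) the maximiser. *)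

(* Defs.v *)
From HB Require Import structures.
From mathcomp Require Import all_boot all_order all_algebra.
From mathcomp Require Import all_classical all_reals all_analysis.
Set Implicit Arguments. Unset Strict Implicit. Unset Printing Implicit Defensive.
Import Order.TTheory GRing.Theory Num.Theory.
Import numFieldNormedType.Exports.
Local Open Scope classical_set_scope.
Local Open Scope ring_scope.

Section Defs.
Context {d : measure_display} {Omega : measurableType d} {R : realType}.
Variable P : probability Omega R.

Definition augmented (G : set (set Omega)) : set (set Omega) :=
  [set A | exists2 C, G C &
     P.-negligible ((A `\` C) `|` (C `\` A))].

Definition F1 (I : Omega -> R) : set (set Omega) :=
  augmented [set I @^-1` C | C in [set C : set R | measurable C]].

Definition F2 : set (set Omega) := augmented [set set0; setT].

(* rho in A°(G_t) for a time-constant filtration G_t = G, t in [0,1].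
   Processes are indexed by t : R, only t in [0,1] matters. *)
Definition in_A0 (G : set (set Omega)) (rho : R -> Omega -> R) : Prop :=
  (forall t, 0 <= t <= 1 -> forall B : set R, measurable B ->
      G (rho t @^-1` B)) /\
  (forall w,
    (forall t : R, 0 <= t < 1 -> (rho x w : R) @[x --> t^'+] --> (rho t w : R)) /\
    (forall t : R, 0 < t <= 1 -> cvg ((rho x w : R) @[x --> t^'-])) /\
    (* non-decreasing on [0,1], with rho_{0-} = 0 *)
    (forall s t, 0 <= s -> s <= t -> t <= 1 -> rho s w <= rho t w) /\
    0 <= rho 0 w /\
    rho 1 w = 1).

Definition rst (rho : R -> Omega -> R) (Z : Omega -> R) (w : Omega) : R :=
  inf [set t | 0 <= t <= 1 /\ Z w < rho t w].

Definition f_pay (t : R) (w : Omega) : R := 1.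
Definition g_pay (t : R) (w : Omega) : R := t / 2.
Definition h_pay (I : Omega -> R) (t : R) (w : Omega) : R :=
  if t < 1 then 1 else if I w == 1 then 2 else 0.

Definition payoff (I : Omega -> R) (tau sigma : R) (w : Omega) : R :=
  f_pay tau w * (if tau < sigma then 1 else 0)
  + g_pay sigma w * (if sigma < tau then 1 else 0)
  + h_pay I tau w * (if tau == sigma then 1 else 0).

Definition Ngame (I Z1 Z2 : Omega -> R) (rho xi : R -> Omega -> R) : \bar R :=
  (\int[P]_w (payoff I (rst rho Z1 w) (rst xi Z2 w) w)%:E)%E.

End Defs.

(* Main.v *)
Require Import Defs.
From HB Require Import structures.
From mathcomp Require Import all_boot all_order all_algebra.
From mathcomp Require Import all_classical all_reals all_analysis.
From mathcomp Require Import lra measurable_realfun.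
Import Order.TTheory GRing.Theory Num.Theory.
Import numFieldNormedType.Exports.
Local Open Scope classical_set_scope.
Local Open Scope ring_scope.

Section Gen.
Context {d : measure_display} {Omega : measurableType d} {R : realType}.
Variable P : probability Omega R.

Lemma int_mono (f g : Omega -> R) : (forall w, 0 <= f w) -> (forall w, f w <= g w) ->
  (\int[P]_w (f w)%:E <= \int[P]_w (g w)%:E)%E.
Proof.
move=> f0 fg.
have g0 : forall w, 0 <= g w by move=> w; exact: le_trans (f0 w) (fg w).
rewrite !ge0_integralTE ?lee_fin//.
apply: ereal_sup_le => _ [h /= hf <-]; exists h => //= x.
by apply: le_trans (hf x) _; rewrite lee_fin.
Qed.

Lemma rst_ge0 (rho : R -> Omega -> R) (Z : Omega -> R) w : 0 <= rst rho Z w.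
Proof.
rewrite /rst; set S := [set t | _].
have [->|St] := eqVneq S set0; first by rewrite inf0.
  move: St => /set0P[t St].
by apply: lb_le_inf; [exists t | move=> y [/andP[]]].
Qed.

Lemma rst_le (rho : R -> Omega -> R) (Z : Omega -> R) w t : 0 <= t <= 1 -> Z w < rho t w -> rst rho Z w <= t.
Proof.
move=> t01 Zt; apply: ge_inf; first by exists 0 => y [/andP[]].
by split.
Qed.

Lemma rst_le1 (rho : R -> Omega -> R) (Z : Omega -> R) w : rst rho Z w <= 1.
Proof.
rewrite /rst; set S := [set t | _].
have [->|St] := eqVneq S set0; first by rewrite inf0.
  move: St => /set0P[t St].
apply: le_trans (_ : t <= 1); last by case: St => /andP[].
by apply: ge_inf => //; exists 0 => y [/andP[]].
Qed.

Lemma rst_eq (rho : R -> Omega -> R) (Z : Omega -> R) w t : 0 <= t <= 1 -> Z w < rho t w ->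
  (forall s, 0 <= s <= 1 -> Z w < rho s w -> t <= s) -> rst rho Z w = t.
Proof.
move=> t01 Zt H; apply/le_anti/andP; split; first exact: rst_le.
by apply: lb_le_inf; [exists t | move=> s [] /H].
Qed.


Definition pr (A : set Omega) : R := fine (P A).

Lemma prE A : measurable A -> P A = (pr A)%:E.
Proof. by move=> mA; rewrite /pr fineK// fin_num_measure. Qed.

Lemma pr_ge0 A : 0 <= pr A.
Proof. by rewrite /pr fine_ge0. Qed.

Lemma pr_le1 A : measurable A -> pr A <= 1.
Proof. by move=> mA; rewrite -lee_fin -prE// probability_le1. Qed.

Lemma prT : pr setT = 1.
Proof. by rewrite /pr probability_setT. Qed.

Lemma prC A : measurable A -> pr (~` A) = 1 - pr A.
Proof.
move=> mA; apply: EFin_inj; rewrite -prE; last exact: measurableC.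
by rewrite probability_setC// prE.
Qed.

Lemma pr_mono A B : measurable A -> measurable B -> A `<=` B -> pr A <= pr B.
Proof. by move=> mA mB AB; rewrite -lee_fin -!prE// le_measure ?inE. Qed.

Lemma prU A B : measurable A -> measurable B -> pr (A `|` B) <= pr A + pr B.
Proof.
move=> mA mB; rewrite -lee_fin EFinD -!prE//; last exact: measurableU.
exact: measureU2.
Qed.

Lemma pr_split A B : measurable A -> measurable B ->
  pr A <= pr (A `&` B) + pr (~` B).
Proof.
move=> mA mB.
apply: le_trans _ (prU _ _ (measurableI _ _ mA mB) (measurableC mB)).
apply: pr_mono => //; first by apply: measurableU; [exact: measurableI| exact: measurableC].
by move=> w Aw; have [Bw|nBw] := pselect (B w); [left|right].
Qed.

Lemma prI1 A G : measurable A -> measurable G -> pr G = 1 -> pr (A `&` G) = pr A.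
Proof.
move=> mA mG G1; apply/le_anti/andP; split.
  by apply: pr_mono; [exact: measurableI | exact: mA | exact: subIsetl].
have := pr_split _ _ mA mG; rewrite prC// G1 subrr addr0 => ->//.
Qed.

Lemma int3 (A B C : set Omega) (a b c : R) :
  measurable A -> measurable B -> measurable C -> 0 <= a -> 0 <= b -> 0 <= c ->
  (\int[P]_w (a * \1_A w + b * \1_B w + c * \1_C w)%:E
   = (a * pr A + b * pr B + c * pr C)%:E)%E.
Proof.
move=> mA mB mC a0 b0 c0.
have mi (X : set Omega) (k : R) : measurable X -> measurable_fun [set: Omega] (fun w : Omega => (k * \1_X w)%:E).
  move=> mX; apply: measurableT_comp => //; apply: measurable_funM.
    exact: measurable_cst.
  exact: measurable_indic.
have i0 (X : set Omega) (k : R) w : 0 <= k -> (0 <= (k * \1_X w)%:E)%E.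
  by move=> k0; rewrite lee_fin mulr_ge0.
under eq_integral do rewrite !EFinD.
rewrite ge0_integralD//; try (by move=> w _; rewrite adde_ge0 ?i0);
  try (by apply: emeasurable_funD; apply: mi); try (by move=> w _; apply: i0);
  try (exact: mi).
rewrite ge0_integralD//; try (by move=> w _; rewrite adde_ge0 ?i0);
  try (by apply: emeasurable_funD; apply: mi); try (by move=> w _; apply: i0);
  try (exact: mi).
under eq_integral do rewrite EFinM.
rewrite ge0_integralZl_EFin//; try (by move=> w _; rewrite lee_fin indic_ge0);
  try (by apply: measurableT_comp => //; exact: measurable_indic).
under [X in (_ + X + _)%E]eq_integral do rewrite EFinM.
rewrite ge0_integralZl_EFin//; try (by move=> w _; rewrite lee_fin indic_ge0);
  try (by apply: measurableT_comp => //; exact: measurable_indic).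
under [X in (_ + _ + X)%E]eq_integral do rewrite EFinM.
rewrite ge0_integralZl_EFin//; try (by move=> w _; rewrite lee_fin indic_ge0);
  try (by apply: measurableT_comp => //; exact: measurable_indic).
rewrite !integral_indic// !setIT.
by rewrite !EFinD !EFinM /pr !fineK// fin_num_measure.
Qed.


Lemma aug_meas (G : set (set Omega)) (A : set Omega) :
  measure_is_complete P -> (forall C, G C -> measurable C) ->
  augmented P G A -> measurable A.
Proof.
move=> cP GM [C GC Nsd].
have mC := GM _ GC.
have mCA : measurable (C `\` A).
  by apply: cP; apply: negligibleS Nsd; exact: subsetUr.
have mAC : measurable (A `\` C).
  by apply: cP; apply: negligibleS Nsd; exact: subsetUl.
have -> : A = (C `\` (C `\` A)) `|` (A `\` C).
  apply/seteqP; split => w.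
    by move=> Aw; have [Cw|nCw] := pselect (C w); [left; split => // -[]|right].
  by case=> [[Cw /not_andP[//|/contrapT//]]|[]].
by apply: measurableU => //; apply: measurableD.
Qed.

Lemma A0_meas (G : set (set Omega)) (rho : R -> Omega -> R) t :
  measure_is_complete P -> (forall C, G C -> measurable C) ->
  in_A0 (augmented P G) rho -> 0 <= t <= 1 -> measurable_fun [set: Omega] (rho t).
Proof.
move=> cP GM [ad _] t01 _ B mB; rewrite setTI.
exact: (aug_meas _ _ cP GM (ad t t01 B mB)).
Qed.

Lemma F2_meas C : [set set0; setT] C -> measurable (C : set Omega).
Proof. by case=> ->. Qed.

Lemma F1_meas (I : Omega -> R) C : measurable_fun setT I ->
  [set I @^-1` C | C in [set C : set R | measurable C]] C -> measurable C.
Proof.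
move=> mI [C' mC' <-]; have := mI measurableT C' mC'; by rewrite setTI.
Qed.

Definition step (a t : R) : R := if t < a then 0 else 1.

Lemma step_ge0 a t : 0 <= step a t.
Proof. by rewrite /step; case: ifP. Qed.

Lemma step_le1 a t : step a t <= 1.
Proof. by rewrite /step; case: ifP. Qed.

Lemma step_mono a s t : s <= t -> step a s <= step a t.
Proof.
rewrite /step => st; case: (ltP s a) => sa; case: (ltP t a) => ta //; lra.
Qed.

Lemma A0_step (G : set (set Omega)) (a : Omega -> R) :
  (forall t, 0 <= t <= 1 -> forall B : set R, measurable B ->
      G ((fun w => step (a w) t) @^-1` B)) ->
  (forall w, 0 < a w <= 1) -> in_A0 G (fun t w => step (a w) t).
Proof.
move=> ad aw; split => // w; have /andP[a0 a1] := aw w.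
move: (a w) a0 a1 => b a0 a1.
split; [|split; [|split; [|split]]].
- move=> t _; apply: cvg_near_cst.
  have [ta|ata] := ltP t b.
    near=> x; have xb : x < b by near: x; exact: nbhs_right_lt.
    by rewrite /step ta xb.
  near=> x; have xb : t < x by near: x; exact: nbhs_right_gt.
  have h1 : (t < b) = false by rewrite ltNge ata.
  have h2 : (x < b) = false by rewrite ltNge (ltW (le_lt_trans ata xb)).
  by rewrite /step h1 h2.
- move=> t _; have [ta|ata] := leP t b.
    apply: (is_cvg_near_cst (0 : R)); near=> x.
    have xb : x < t by near: x; exact: nbhs_left_lt.
    by rewrite /step ifT//; apply: (lt_le_trans xb ta).
  apply: (is_cvg_near_cst (1 : R)); near=> x.
  have xb : b < x by near: x; exact: nbhs_left_gt.
  have h2 : (x < b) = false by rewrite ltNge (ltW xb).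
  by rewrite /step h2.
- by move=> s t _ st _; exact: step_mono.
- exact: step_ge0.
- by rewrite /step ltNge a1.
Unshelve. all: by end_near.
Qed.


Lemma aug_self (G : set (set Omega)) A : G A -> augmented P G A.
Proof. by move=> GA; exists A => //; rewrite setDv setU0; exact: negligible_set0. Qed.

Lemma F2_cst (v : R) (B : set R) : F2 P ((fun _ : Omega => v) @^-1` B).
Proof.
apply: aug_self; have [Bv|nBv] := pselect (B v).
  by right; apply/seteqP; split => w //=.
by left; apply/seteqP; split => w //=.
Qed.

Lemma meas_cstP (p : Prop) : measurable [set _ : R | p].
Proof.
have [hp|hp] := pselect p.
  by rewrite (_ : [set _ | p] = setT)//; apply/seteqP; split.
by rewrite (_ : [set _ | p] = set0)//; apply/seteqP; split.
Qed.

Lemma A0_det (a : R) : 0 < a <= 1 -> in_A0 (F2 P) (fun t (w : Omega) => step a t).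
Proof.
move=> a01; apply: (@A0_step _ (fun _ => a)) => // t _ B _; exact: F2_cst.
Qed.

Lemma A0_inf (I : Omega -> R) (s : R) : 0 < s <= 1 ->
  in_A0 (F1 P I) (fun t w => step (if I w == 1 then s else 1) t).
Proof.
move=> s01; apply: A0_step; last first.
  by move=> w; case: ifP => // _; rewrite ltr01 lexx.
move=> t _ B mB; apply: aug_self.
exists ([set 1] `&` [set _ | B (step s t)] `|` ~` [set 1] `&` [set _ | B (step 1 t)]).
  apply: measurableU; apply: measurableI; try exact: meas_cstP;
    try apply: measurableC; exact: measurable_set1.
apply/seteqP; split => w /=.
  case=> -[/= Iw H].
    by rewrite Iw eqxx.
  by rewrite ifN//; apply/eqP.
by case: ifPn => [/eqP Iw H|/eqP Iw H]; [left|right].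
Qed.


Definition sn (n : nat) : R := 1 - (n.+1%:R)^-1.

Lemma sn_ge0 n : 0 <= sn n.
Proof. by rewrite /sn subr_ge0 invf_le1// ler1n. Qed.

Lemma sn_lt1 n : sn n < 1.
Proof. by rewrite /sn ltrBlDr ltrDl invr_gt0 ltr0n. Qed.

Lemma sn_mono m n : (m <= n)%N -> sn m <= sn n.
Proof.
move=> mn; rewrite /sn lerB// lef_pV2 ?posrE ?ltr0n// ler_nat ltnS//.
Qed.

Lemma sn_ge9 n : (9 <= n)%N -> 9 / 10 <= sn n.
Proof.
move=> n9; apply: le_trans _ (sn_mono _ _ n9); rewrite /sn.
rewrite (_ : 10%:R = 10 :> R)//; lra.
Qed.

Lemma sn_ltS n : sn n < sn n.+1.
Proof.
rewrite /sn ltrD2l ltrN2 ltf_pV2 ?posrE ?ltr0n // ltr_nat.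
exact: ltnSn.
Qed.

Lemma sn_S_gt0 n : 0 < sn n.+1.
Proof. by rewrite /sn subr_gt0 invf_lt1 ?ltr0n // ltr1n. Qed.

Lemma sn_adh t : t < 1 -> exists n, t < sn n.
Proof. by move=> /ltr_add_invr[k hk]; exists k; rewrite /sn ltrBrDr. Qed.

Lemma payoff_ge0 (I : Omega -> R) tau sigma w : 0 <= sigma -> 0 <= payoff I tau sigma w.
Proof.
move=> s0; rewrite /payoff /f_pay /g_pay /h_pay.
repeat case: ifP => _; rewrite ?mulr0 ?mulr1 ?addr0 ?add0r //; lra.
Qed.

Lemma payoff_le2 (I : Omega -> R) tau sigma w : 0 <= sigma <= 1 -> payoff I tau sigma w <= 2.
Proof.
move=> /andP[s0 s1]; rewrite /payoff /f_pay /g_pay /h_pay.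
case: (ltgtP tau sigma) => _; rewrite ?mulr0 ?mulr1 ?addr0 ?add0r; try lra.
by repeat case: ifP => _; lra.
Qed.

Lemma rst_step (a : R) (Z : Omega -> R) w : 0 < a <= 1 -> 0 <= Z w < 1 ->
  rst (fun t w => step a t) Z w = a.
Proof.
move=> /andP[a0 a1] /andP[Z0 Z1]; apply: rst_eq.
- by rewrite (ltW a0) a1.
- by rewrite /step ltxx.
move=> s _; rewrite /step; case: (ltP s a) => [_ Zs|//]; lra.
Qed.

Lemma meas_lt (f g : Omega -> R) : measurable_fun [set: Omega] f ->
  measurable_fun [set: Omega] g -> measurable [set w | f w < g w].
Proof.
move=> mf mg; have := measurable_fun_ltr mf mg measurableT (I : @measurable _ bool [set true]).
by rewrite setTI.
Qed.

Lemma ind1 (X : set Omega) w : X w -> \1_X w = 1 :> R.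
Proof. by move=> Xw; rewrite indicE mem_set. Qed.

Lemma ind0 (X : set Omega) w : ~ X w -> \1_X w = 0 :> R.
Proof. by move=> Xw; rewrite indicE memNset. Qed.

Lemma pr0 : pr set0 = 0.
Proof. by rewrite /pr measure0. Qed.

Lemma P0 X : measurable X -> pr X = 0 -> P X = 0.
Proof. by move=> mX h; rewrite prE // h. Qed.

Lemma zero_one (A : set Omega) : measurable A -> F2 P A -> pr A = 0 \/ pr A = 1.
Proof.
move=> mA [C [->|->] N].
  by left; rewrite setD0 set0D setU0 in N; rewrite /pr (measure_negligible mA N).
right; rewrite setDT setTD set0U in N.
have mAc : measurable (~` A) by exact: measurableC.
have h0 := measure_negligible mAc N.
have : pr (~` A) = 0 by rewrite /pr h0.
by rewrite prC// => h; lra.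
Qed.

Lemma const_ae (Y : Omega -> R) : measurable_fun setT Y ->
  (forall B : set R, measurable B -> F2 P (Y @^-1` B)) ->
  (forall w, 0 <= Y w <= 1) ->
  exists2 c : R, 0 <= c <= 1 & P.-negligible [set w | Y w != c].
Proof.
move=> mY FY Y01.
have mpre (B : set R) : measurable B -> measurable (Y @^-1` B).
  by move=> mB; have := mY measurableT B mB; rewrite setTI.
pose D := [set r : R | pr (Y @^-1` `]-oo, r]%classic) = 1].
have D1 : D 1.
  rewrite /D /= (_ : _ @^-1` _ = setT) ?prT //; apply/seteqP; split => w //= _.
  by rewrite in_itv /=; case/andP: (Y01 w).
have Dlb r : D r -> 0 <= r.
  rewrite /D /= leNgt => h; apply/negP => r0; move: h.
  rewrite (_ : _ @^-1` _ = set0) ?pr0; first by move=> h; lra.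
  apply/seteqP; split => w //=; rewrite in_itv /= => h.
  by case/andP: (Y01 w) => h0 _; lra.
have hD : has_lbound D by exists 0.
pose c := inf D.
have c0 : 0 <= c by apply: lb_le_inf; [exists 1 | exact: Dlb].
have c1 : c <= 1 by apply: ge_inf.
exists c; first by rewrite c0 c1.
pose N1 := \bigcup_k (Y @^-1` `]-oo, c - k.+1%:R^-1]%classic).
pose N2 := \bigcup_k (Y @^-1` `]c + k.+1%:R^-1, +oo[%classic).
have N1n : P.-negligible N1.
  apply: negligible_bigcup => k; apply/negligibleP; first exact: mpre.
  have [h|h] := zero_one (Y @^-1` `]-oo, c - k.+1%:R^-1]%classic) (mpre _ (measurable_itv _)) (FY _ (measurable_itv _)).
    by apply: P0 => //; exact: mpre.
  have h2 : inf D <= inf D - k.+1%:R^-1 by apply: ge_inf.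
  have h3 : 0 < k.+1%:R^-1 :> R by rewrite invr_gt0 ltr0n.
  exfalso; move: h2 h3; set e := k.+1%:R^-1; clearbody e; move=> h2 h3; lra.
have N2n : P.-negligible N2.
  apply: negligible_bigcup => k; apply/negligibleP; first exact: mpre.
  have ek0 : 0 < k.+1%:R^-1 :> R by rewrite invr_gt0 ltr0n.
  move: (k.+1%:R^-1) ek0 => e ek.
  have [r Dr rc] : exists2 r, D r & r < c + e.
    by apply: inf_lt; [exists 1 | rewrite /c; move: (inf D) => x; lra].
  have sub : Y @^-1` `]c + e, +oo[%classic `<=` ~` (Y @^-1` `]-oo, r]%classic).
    by move=> w /=; rewrite !in_itv /= => h1 h2; lra.
  have := pr_mono _ _ (mpre _ (measurable_itv _)) (measurableC (mpre _ (measurable_itv _))) sub.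
  rewrite prC ?Dr; last exact: mpre.
  move=> h; apply: P0; first exact: mpre.
  by apply/le_anti; rewrite pr_ge0 andbT; lra.
apply: negligibleS (negligibleU N1n N2n) => w /= /eqP Yc.
have [Ylt|Ygt] : Y w < c \/ c < Y w.
  by case: (ltgtP (Y w) c) => h; [left|right|].
  have [k hk] := ltr_add_invr Ylt; left; exists k => //=.
  rewrite in_itv /=; move: hk; move: (k.+1%:R^-1) => e; move: (inf D) => x; lra.
have [k hk] := ltr_add_invr Ygt; right; exists k => //=.
by rewrite in_itv /= hk.
Qed.

Section Zfacts.
Variable Z : Omega -> R.
Hypothesis hZ : forall B : set R, measurable B ->
     P (Z @^-1` B) = lebesgue_measure (B `&` `[0, 1]%classic).

Lemma prZ (B : set R) : measurable B ->
  pr (Z @^-1` B) = fine (lebesgue_measure (B `&` `[0, 1]%classic)).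
Proof. by move=> mB; rewrite /pr hZ. Qed.

Lemma pr_Zge c : 0 <= c <= 1 -> pr (Z @^-1` `[c, +oo[%classic) = 1 - c.
Proof.
move=> /andP[c0 c1]; rewrite prZ//.
rewrite (_ : _ `&` _ = `[c, 1]%classic); last first.
  apply/seteqP; split => x /=; rewrite !in_itv /= ?andbT.
    by move=> [cx /andP[_ ->]]; rewrite cx.
  move=> /andP[cx x1]; split => //; rewrite x1 andbT; exact: le_trans c0 cx.
rewrite lebesgue_measure_itv /= lte_fin.
case: ltP => c1' /=//; lra.
Qed.

Lemma pr_Zco c : 0 <= c <= 1 -> pr (Z @^-1` `[c, 1[%classic) = 1 - c.
Proof.
move=> /andP[c0 c1]; rewrite prZ//.
rewrite (_ : _ `&` _ = `[c, 1[%classic); last first.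
  apply/seteqP; split => x /=; rewrite !in_itv /=.
    by move=> [/andP[cx x1] _]; rewrite cx x1.
  move=> /andP[cx x1]; split; first by rewrite cx x1.
  by rewrite (ltW x1) andbT; exact: le_trans c0 cx.
rewrite lebesgue_measure_itv /= lte_fin.
case: ltP => c1' /=//; lra.
Qed.

End Zfacts.

End Gen.

Section Main.
Context {d : measure_display} {Omega : measurableType d} {R : realType}.
Variables (P : probability Omega R) (I Z1 Z2 : Omega -> R).
Hypotheses (cP : measure_is_complete P) (mI : measurable_fun setT I)
  (mZ1 : measurable_fun setT Z1) (mZ2 : measurable_fun setT Z2)
  (hI1 : P (I @^-1` [set 1]) = (1 / 2)%:E)
  (hZ1 : forall B : set R, measurable B ->
     P (Z1 @^-1` B) = lebesgue_measure (B `&` `[0, 1]%classic))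
  (hZ2 : forall B : set R, measurable B ->
     P (Z2 @^-1` B) = lebesgue_measure (B `&` `[0, 1]%classic))
  (hind : forall A B C : set R, measurable A -> measurable B -> measurable C ->
     P (I @^-1` A `&` Z1 @^-1` B `&` Z2 @^-1` C)
     = (P (I @^-1` A) * P (Z1 @^-1` B) * P (Z2 @^-1` C))%E).

Let mpre (Z : Omega -> R) (B : set R) : measurable_fun setT Z -> measurable B ->
  measurable (Z @^-1` B).
Proof. by move=> mZ mB; have := mZ measurableT B mB; rewrite setTI. Qed.

Let I1 := I @^-1` [set 1].
Let mI1 : measurable I1. Proof. exact: mpre. Qed.
Let pI1 : pr P I1 = 1 / 2. Proof. by rewrite /pr /I1 hI1. Qed.
Let prNI1 : pr P (~` I1) = 1 / 2. Proof. rewrite prC// pI1; lra. Qed.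

Let G2 := Z2 @^-1` `[0, 1[%classic.
Let mG2 : measurable G2. Proof. exact: mpre. Qed.
Let prG2 : pr P G2 = 1.
Proof. rewrite /G2 pr_Zco//; [lra | by rewrite lexx ler01]. Qed.
Let M1 := Z1 @^-1` `[0, 1[%classic.
Let mM1 : measurable M1. Proof. exact: mpre. Qed.
Let prM1 : pr P M1 = 1.
Proof. rewrite /M1 pr_Zco//; [lra | by rewrite lexx ler01]. Qed.

Lemma part2 (rho : R -> Omega -> R) : in_A0 (F1 P I) rho ->
  ((3 / 5)%:E <= ereal_sup [set Ngame P I Z1 Z2 rho xi | xi in in_A0 (F2 P)])%E.
Proof.
move=> A0rho.
have mrho t : 0 <= t <= 1 -> measurable_fun setT (rho t).
  move=> t01; apply: (A0_meas _ _ _ _ cP _ A0rho t01) => C; exact: F1_meas.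
have rho1 w : rho 1 w = 1 by have [_ /(_ w)[_ [_ [_ [_ ->]]]]] := A0rho.
have rhomono w s t : 0 <= s -> s <= t -> t <= 1 -> rho s w <= rho t w.
  by have [_ /(_ w)[_ [_ [+ _]]]] := A0rho; apply.
pose An n := [set w | Z1 w < rho (sn n) w].
have mAn n : measurable (An n).
  apply: meas_lt => //; apply: mrho; rewrite sn_ge0 ltW//; exact: sn_lt1.
pose A := \bigcup_n An n.
have mA : measurable A by exact: bigcupT_measurable.
have tauA w : A w -> rst rho Z1 w < 1.
  move=> [n _ hn]; apply: le_lt_trans (sn_lt1 n).
  by apply: rst_le => //; rewrite sn_ge0 ltW// sn_lt1.
have tauNA w : ~ A w -> Z1 w < 1 -> rst rho Z1 w = 1.
  move=> nAw Z1w; apply: rst_eq; first by rewrite ler01 lexx.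
    by rewrite rho1.
  move=> s /andP[s0 s1] Zs; rewrite leNgt; apply/negP => /sn_adh[n sn].
  apply: nAw; exists n => //; rewrite /An /=.
  by apply: lt_le_trans Zs _; apply: rhomono => //; [exact: ltW | exact/ltW/sn_lt1].
have G2E w : G2 w -> 0 <= Z2 w < 1 by rewrite /G2 /= in_itv.
have M1E w : M1 w -> Z1 w < 1 by rewrite /M1 /= in_itv => /andP[].
have [pA|pA] := leP (pr P A) (2 / 5).
- pose xi := fun (t : R) (w : Omega) => step 1 t.
  have A0xi : in_A0 (F2 P) xi by apply: A0_det; rewrite ltr01 lexx.
  apply: le_ereal_sup_tmp; exists (Ngame P I Z1 Z2 rho xi); first by exists xi.
  rewrite /Ngame.
  pose g (w : Omega) : R := 1 * \1_(A `&` G2) w + 2 * \1_(~` A `&` M1 `&` I1 `&` G2) w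
              + 0 * \1_(@set0 Omega) w.
  suff H : ((3 / 5)%:E <= \int[P]_w (g w)%:E)%E.
    apply: le_trans H _; apply: int_mono => w.
      by rewrite /g; apply: addr_ge0; [apply: addr_ge0|]; apply: mulr_ge0;
        rewrite ?indic_ge0 //; lra.
    rewrite /g mul0r addr0 mul1r.
    have [G2w|nG2w] := pselect (G2 w); last first.
      rewrite !ind0; [|by case|by case].
      by rewrite mulr0 addr0; apply: payoff_ge0; exact: rst_ge0.
    have -> : rst xi Z2 w = 1 by apply: rst_step; [rewrite ltr01 lexx | exact: G2E].
    have [Aw|nAw] := pselect (A w).
      rewrite ind1 // ind0; last by move=> [[[]]].
      have t1 := tauA w Aw.
      by rewrite /payoff /f_pay /g_pay /h_pay; case: ltgtP => h /=; lra.
    have [[M1w I1w]|nMI] := pselect (M1 w /\ I1 w).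
      rewrite ind0; last by case.
      rewrite ind1; last by [].
      rewrite (tauNA w nAw (M1E w M1w)) /payoff /f_pay /g_pay /h_pay ltxx eqxx.
      by rewrite /I1 /= in I1w; rewrite I1w eqxx /=; lra.
    rewrite !ind0; [|by move=> [[[_ ?] ?] _]; apply: nMI|by case].
    by rewrite mulr0 addr0; apply: payoff_ge0; exact: ler01.
  rewrite /g.
  have mAc : measurable (~` A) by exact: measurableC.
  have mAcM : measurable (~` A `&` M1) by exact: measurableI.
  have mAcMI : measurable (~` A `&` M1 `&` I1) by exact: measurableI.
  rewrite int3 //; try (exact: measurableI).
  rewrite lee_fin mul1r mul0r addr0.
  rewrite (prI1 _ _ _ mA mG2 prG2) (prI1 _ _ _ mAcMI mG2 prG2).
  have e3 := prI1 _ _ _ mAc mM1 prM1.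
  have e4 := pr_split P _ _ mAcM mI1.
  have e5 := prC P _ mA.
  have e6 := prNI1.
  lra.
have ndA : nondecreasing_seq An.
  move=> m k mk; apply/subsetPset => w; rewrite /An /= => h.
  apply: lt_le_trans h _; apply: rhomono; first exact: sn_ge0.
    exact: sn_mono.
  exact/ltW/sn_lt1.
have cv := nondecreasing_cvg_mu (mu := P) mAn mA ndA.
have [n [n9 pn]] : exists n, (9 <= n)%N /\ 7 / 20 < pr P (An n).
  apply: contrapT => H.
  have : (P A <= (7 / 20)%:E)%E.
    rewrite -(cvg_lim _ cv) //; apply: lime_le; first by apply/cvg_ex; eexists; exact: cv.
    exists 9%N => // k /= k9; rewrite prE //; rewrite lee_fin leNgt; apply/negP => hk.
    by apply: H; exists k.
  by rewrite prE // lee_fin => h; lra.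
have sn9 : 9 / 10 <= (sn n : R) := sn_ge9 _ n9.
pose xi := fun (t : R) (w : Omega) => step (sn n) t.
have sn01 : 0 < (sn n : R) <= 1 by rewrite (ltW (sn_lt1 n)) andbT; lra.
have A0xi : in_A0 (F2 P) xi by apply: A0_det.
apply: le_ereal_sup_tmp; exists (Ngame P I Z1 Z2 rho xi); first by exists xi.
rewrite /Ngame.
pose g (w : Omega) : R := 9 / 20 * \1_G2 w + 11 / 20 * \1_(An n `&` G2) w
            + 0 * \1_(@set0 Omega) w.
suff H : ((3 / 5)%:E <= \int[P]_w (g w)%:E)%E.
  apply: le_trans H _; apply: int_mono => w.
    by rewrite /g; apply: addr_ge0; [apply: addr_ge0|]; apply: mulr_ge0;
      rewrite ?indic_ge0 //; lra.
  rewrite /g mul0r addr0.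
  have [G2w|nG2w] := pselect (G2 w); last first.
    rewrite !ind0; [|by case|by []].
    by rewrite !mulr0 addr0; apply: payoff_ge0; exact: rst_ge0.
  have -> : rst xi Z2 w = sn n by apply: rst_step; [exact: sn01 | exact: G2E].
  have ltsn : (sn n : R) < 1 := sn_lt1 n.
  rewrite ind1 //.
  have [Anw|nAnw] := pselect (An n w).
    rewrite ind1 //.
    have tle : rst rho Z1 w <= sn n.
      by apply: rst_le => //; rewrite sn_ge0 ltW.
    have t1 : rst rho Z1 w < 1 by apply: le_lt_trans tle ltsn.
    rewrite /payoff /f_pay /g_pay /h_pay t1 /=.
    by case: ltgtP => h; lra.
  rewrite ind0; last by case.
  rewrite /payoff /f_pay /g_pay /h_pay.
  case: ltgtP => h; rewrite ?mulr0 ?mulr1 ?addr0 ?add0r; try lra.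
  by rewrite h ltsn; lra.
rewrite /g int3 //; try (exact: measurableI).
rewrite lee_fin mul0r addr0 prG2 (prI1 _ _ _ (mAn n) mG2 prG2).
lra.
Qed.


Let indep (A C : set R) : measurable A -> measurable C ->
  pr P (I @^-1` A `&` Z2 @^-1` C) = pr P (I @^-1` A) * pr P (Z2 @^-1` C).
Proof.
move=> mA mC; have := hind _ _ _ mA measurableT mC.
rewrite preimage_setT setIT probability_setT mule1.
rewrite (prE _ (I @^-1` A)) ?(prE _ (Z2 @^-1` C)); try exact: mpre.
by rewrite -EFinM /pr => ->.
Qed.

Lemma part1 (xi : R -> Omega -> R) : in_A0 (F2 P) xi ->
  (ereal_inf [set Ngame P I Z1 Z2 rho xi | rho in in_A0 (F1 P I)] <= (1 / 2)%:E)%E.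
Proof.
move=> A0xi.
have mxi t : 0 <= t <= 1 -> measurable_fun setT (xi t).
  move=> t01; apply: (A0_meas _ _ _ _ cP _ A0xi t01) => C; exact: F2_meas.
have xi1 w : xi 1 w = 1 by have [_ /(_ w)[_ [_ [_ [_ ->]]]]] := A0xi.
have ximono w s t : 0 <= s -> s <= t -> t <= 1 -> xi s w <= xi t w.
  by have [_ /(_ w)[_ [_ [+ _]]]] := A0xi; apply.
have xi0 w : 0 <= xi 0 w by have [_ /(_ w)[_ [_ [_ [+ _]]]]] := A0xi.
have xi01 t w : 0 <= t <= 1 -> 0 <= xi t w <= 1.
  move=> /andP[t0 t1]; apply/andP; split.
    by apply: le_trans (xi0 w) (ximono w _ _ _ t0 t1).
  by rewrite -(xi1 w); apply: ximono.
have snk01 k : 0 <= (sn k : R) <= 1 by rewrite sn_ge0 ltW// sn_lt1.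
have hc k : exists c : R, (0 <= c <= 1) /\ P.-negligible [set w | xi (sn k) w != c].
  have [c c01 cn] := const_ae P _ (mxi _ (snk01 k)) (A0xi.1 _ (snk01 k))
    (fun w => xi01 _ w (snk01 k)).
  by exists c.
have [c /all_and2[c01 cneg]] := choice hc.
pose L := sup (range c).
have hsL : has_sup (range c).
  split; first by exists (c 0%N), 0%N.
  by exists 1 => _ [k _ <-]; case/andP: (c01 k).
have cL k : c k <= L by apply: sup_upper_bound => //; exists k.
have L1 : L <= 1.
  by apply: ge_sup; [exists (c 0%N), 0%N | move=> _ [k _ <-]; case/andP: (c01 k)].
have L0 : 0 <= L by apply: le_trans (cL 0%N); case/andP: (c01 0%N).
apply/lee_addgt0Pr => e e0.
have [_ [j _ <-] hj] := sup_adherent e0 hsL.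
pose s : R := sn j.+1.
have s01 : 0 < s <= 1 by rewrite sn_S_gt0 ltW// sn_lt1.
have s1 : s < 1 by exact: sn_lt1.
pose rho := fun t w => step (if I w == 1 then s else 1) t.
have A0rho : in_A0 (F1 P I) rho := A0_inf P I _ s01.
apply: ge_ereal_inf; exists (Ngame P I Z1 Z2 rho xi); first by exists rho.
rewrite /Ngame.
pose Bad := ~` M1 `|` ~` G2 `|` \bigcup_k [set w | xi (sn k) w != c k].
have nM1 : P.-negligible (~` M1).
  apply/negligibleP; first exact: measurableC.
  by apply: P0; [exact: measurableC | rewrite prC // prM1 subrr].
have nG2 : P.-negligible (~` G2).
  apply/negligibleP; first exact: measurableC.
  by apply: P0; [exact: measurableC | rewrite prC // prG2 subrr].
have nBad : P.-negligible Bad.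
  by apply: negligibleU; [exact: negligibleU | exact: negligible_bigcup].
have mBad : measurable Bad := cP _ nBad.
have pBad : pr P Bad = 0 by rewrite /pr (measure_negligible mBad nBad).
pose Bp := Z2 @^-1` `[c j, +oo[%classic.
pose Cp := Z2 @^-1` `[L, 1[%classic.
have mBp : measurable Bp by exact: mpre.
have mCp : measurable Cp by exact: mpre.
pose g (w : Omega) : R := 1 / 2 * \1_(~` (~` I1 `&` Cp)) w
   + 1 / 2 * \1_(I1 `&` Bp) w + 2 * \1_Bad w.
suff H : (\int[P]_w (g w)%:E <= (1 / 2 + e)%:E)%E.
  apply: le_trans _ H; apply: int_mono => w.
    by apply: payoff_ge0; exact: rst_ge0.
  rewrite /g.
  have sg0 := rst_ge0 xi Z2 w; have sg1 := rst_le1 xi Z2 w.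
  have i0 (X : set Omega) : 0 <= \1_X w :> R by rewrite indicE ler0n.
  have [Bw|nBw] := pselect (Bad w).
    rewrite (ind1 _ _ Bw) mulr1.
    have := payoff_le2 I (rst rho Z1 w) (rst xi Z2 w) w.
    rewrite sg0 sg1 => /(_ isT) hp.
    have := i0 (~` (~` I1 `&` Cp)); have := i0 (I1 `&` Bp).
    move=> ? ?; lra.
  have M1w : M1 w by apply: contrapT => h; apply: nBw; left; left.
  have G2w : G2 w by apply: contrapT => h; apply: nBw; left; right.
  have Xk k : xi (sn k) w = c k.
    by apply: contrapT => h; apply: nBw; right; exists k => //; apply/eqP.
  rewrite (ind0 _ _ nBw) mulr0 addr0.
  have /andP[Z10 Z11] : 0 <= Z1 w < 1 by move: M1w; rewrite /M1 /= in_itv.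
  have /andP[Z20 Z21] : 0 <= Z2 w < 1 by move: G2w; rewrite /G2 /= in_itv.
  have tauE : rst rho Z1 w = (if I w == 1 then s else 1).
    have a01 : 0 < (if I w == 1 then s else 1) <= 1.
      by case: ifP => _ //; rewrite ltr01 lexx.
    exact: (rst_step _ _ w a01 (_ : 0 <= Z1 w < 1)).
  have [Iw|Iw] := eqVneq (I w) 1.
  - have I1w : I1 w := Iw.
    rewrite tauE Iw eqxx (ind1 (~` (~` I1 `&` Cp)) w); last by move=> [h _]; exact: h.
    have [Bpw|nBpw] := pselect (Bp w).
      rewrite (ind1 (I1 `&` Bp) w) //.
      rewrite /payoff /f_pay /g_pay /h_pay s1 /=.
      by case: ltgtP => h; lra.
    rewrite (ind0 (I1 `&` Bp) w); last by case.
    have Zc : Z2 w < c j.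
      by rewrite ltNge; apply/negP => h; apply: nBpw; rewrite /Bp /= in_itv /= h.
    have hsig : rst xi Z2 w < s.
      apply: le_lt_trans (sn_ltS j); apply: rst_le => //.
      by rewrite Xk.
    rewrite /payoff /f_pay /g_pay /h_pay.
    by case: ltgtP => h; lra.
  - rewrite tauE (negbTE Iw) (ind0 (I1 `&` Bp) w); last first.
      by move=> [/= h _]; move/eqP: Iw.
    rewrite /payoff /f_pay /g_pay /h_pay ltxx /= (negbTE Iw).
    have [Cpw|nCpw] := pselect (Cp w).
      have LZ : L <= Z2 w by move: Cpw; rewrite /Cp /= in_itv => /andP[].
      have sig1 : rst xi Z2 w = 1.
        apply: rst_eq; first by rewrite ler01 lexx.
          by rewrite xi1.
        move=> t /andP[t0 t1] Zt; rewrite leNgt; apply/negP => /sn_adh[k hk].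
        have := ximono w _ _ t0 (ltW hk) (ltW (sn_lt1 k)).
        rewrite Xk => h; have := cL k; lra.
      rewrite sig1 ltxx eqxx /=.
      have := i0 (~` (~` I1 `&` Cp)); lra.
    rewrite (ind1 (~` (~` I1 `&` Cp)) w); last by move=> [_ h].
    by case: ltgtP => h; lra.
have mNI1 : measurable (~` I1) by exact: measurableC.
rewrite /g int3 //; try (exact: measurableI);
  try (by apply: measurableC; exact: measurableI).
have i1 : pr P (~` I1 `&` Cp) = pr P (~` I1) * pr P Cp.
  exact: (indep _ _ (measurableC (measurable_set1 1)) (measurable_itv _)).
have i2 : pr P (I1 `&` Bp) = pr P I1 * pr P Bp.
  exact: (indep _ _ (measurable_set1 1) (measurable_itv _)).
have pCp : pr P Cp = 1 - L by rewrite /Cp pr_Zco // L0 L1.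
have pBp : pr P Bp = 1 - c j by rewrite /Bp pr_Zge // c01.
have h1 := pI1; have h2 := prNI1.
rewrite lee_fin pBad prC; last exact: measurableI.
rewrite i1 i2 pCp pBp h1 h2.
have hj' : L - e < c j := hj.
have key : forall a b x : R, b - x < a -> 0 < x ->
  1 / 2 * (1 - 1 / 2 * (1 - b)) + 1 / 2 * (1 / 2 * (1 - a)) + 2 * 0 <= 1 / 2 + x.
  by move=> a b x ? ?; lra.
exact: key hj' e0.
Qed.

End Main.

Theorem mainTheorem19 (d : measure_display) (Omega : measurableType d)
  (R : realType) (P : probability Omega R) (I Z1 Z2 : Omega -> R) :
  measure_is_complete P ->
  measurable_fun setT I -> measurable_fun setT Z1 -> measurable_fun setT Z2 ->
  P (I @^-1` [set 1]) = (1 / 2)%:E ->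
  P (I @^-1` [set 2]) = (1 / 2)%:E ->
  (forall B : set R, measurable B ->
     P (Z1 @^-1` B) = lebesgue_measure (B `&` `[0, 1]%classic)) ->
  (forall B : set R, measurable B ->
     P (Z2 @^-1` B) = lebesgue_measure (B `&` `[0, 1]%classic)) ->
  (* I, Z1, Z2 mutually independent *)
  (forall A B C : set R, measurable A -> measurable B -> measurable C ->
     P (I @^-1` A `&` Z1 @^-1` B `&` Z2 @^-1` C)
     = (P (I @^-1` A) * P (Z1 @^-1` B) * P (Z2 @^-1` C))%E) ->
  (ereal_sup [set ereal_inf [set Ngame P I Z1 Z2 rho xi | rho in in_A0 (F1 P I)]
             | xi in in_A0 (F2 P)] <= (1 / 2)%:E)%E /\
  ((1 / 2)%:E < ereal_inf [set ereal_sup [set Ngame P I Z1 Z2 rho xi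
                                         | xi in in_A0 (F2 P)]
                          | rho in in_A0 (F1 P I)])%E.
Proof.
move=> cP mI mZ1 mZ2 hI1 hI2 hZ1 hZ2 hind; split.
  apply: ge_ereal_sup => _ [xi A0xi <-].
  by apply: part1 => //.
apply: (@lt_le_trans _ _ (3 / 5)%:E); first by rewrite lte_fin; lra.
apply: le_ereal_inf_tmp => _ [rho A0rho <-].
by apply: part2 => //.
Qed.
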